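(* Let $N\geq1$ and let $r$ be an integer with $-(N-1)\leq r\leq N-1$ and $r\neq\pm(N-2)$. Define $$f^{\mathrm{rnk}}_N(r)=\max\Big\{\sum_{l=1}^{|\Lambda|}N_l^2\ :\ \Lambda\text{ a partition of }\{1,\dots,N\}\text{ with }\max\Lambda-|\Lambda|\leq r\Big\}.$$ Then: (i) if $N+r$ is odd, $f^{\mathrm{rnk}}_N(r)=\frac14(N+r+1)^2+\frac12(N-r-1)$; (ii) if $N+r=10$ and $N\geq 8$, $f^{\mathrm{rnk}}_N(r)=34-r$; (iii) if $N+r=16$ and $N\geq12$, $f^{\mathrm{rnk}}_N(r)=76-r$; (iv) if $N+r$ is even and neither (ii) nor (iii) applies, $f^{\mathrm{rnk}}_N(r)=\frac14(N+r)^2+\frac12(N-r)+2$.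
   Context: A partition $\Lambda=\{A_1,\dots,A_{|\Lambda|}\}$ of $\{1,\dots,N\}$ is a collection of nonempty pairwise disjoint subsets whose union is $\{1,\dots,N\}$; $|\Lambda|$ is the number of subsets, $N_l=|A_l|$, and $\max\Lambda=\max_lN_l$. The quantity $\max\Lambda-|\Lambda|$ is Dyson's rank of the partition; its possible values are the integers from $-(N-1)$ to $N-1$ except $\pm(N-2)$. *)

(* Defs.v *)
From mathcomp Require Import all_boot all_order all_algebra.
Set Implicit Arguments. Unset Strict Implicit. Unset Printing Implicit Defensive.
Import Order.TTheory GRing.Theory Num.Theory.

(* The ground set {1,...,N} is represented by 'I_N = {0,...,N-1}.
   A partition Lambda of it is a P : {set {set 'I_N}} with
   partition P [set: 'I_N] (blocks nonempty, pairwise disjoint, covering). *)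

Definition maxblock N (P : {set {set 'I_N}}) : nat := \max_(A in P) #|A|.

Definition dyson_rank N (P : {set {set 'I_N}}) : int :=
  ((maxblock P)%:Z - (#|P|)%:Z)%R.

Definition frnk (N : nat) (r : int) : nat :=
  \max_(P : {set {set 'I_N}} | partition P [set: 'I_N] && (dyson_rank P <= r)%R)
     \sum_(A in P) #|A| ^ 2.

(* Main.v *)
Require Import Defs.
From Stdlib Require Import ZArith Lia.
Open Scope Z_scope.
Lemma L1e w D e : 0 <= e <= D -> 2*D+e <= 2*w ->
  4*(D*(D+1) + e*(e+1)) <= 2*w*(2*w+2).
Proof. intros.
destruct (Z.eq_dec e 0) as [->|]. nia.
destruct (Z.eq_dec e 1) as [->|]. nia.
assert (e*(4*D-3*e-2) >= 0) by nia.
assert ((2*D+e)*(2*D+e+2) <= 2*w*(2*w+2)) by nia.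
nia. Qed.
Lemma L1o w D e : 0 <= e <= D -> 2*D+e <= 2*w+1 -> ~(D=3/\e=3) -> ~(D=5/\e=5) ->
  4*(D*(D+1) + e*(e+1)) <= (2*w+1)*(2*w+1)+7.
Proof. intros.
destruct (Z.eq_dec e 0) as [->|]. nia.
destruct (Z.eq_dec e 1) as [->|]. nia.
assert (e*(4*D-3*e-2) >= 0) by nia.
destruct (Z.eq_dec (2*D+e) (2*w+1)).
- assert (e = 3 \/ e = 5 \/ e >= 7) as [->|[->|]] by lia.
  + assert (D >= 4) by lia. nia.
  + assert (D >= 6) by lia. nia.
  + assert ((e-1)*(e-7) >= 0) by nia. assert ((D-e)*(e-1) >= 0) by nia. nia.
- assert ((2*D+e)*(2*D+e+2) <= (2*w)*(2*w+2)) by nia. nia.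
Qed.
Lemma L2 u D e TR S (b : bool) : 1 <= e <= D -> 1 <= TR -> 2*D+e+TR <= u ->
  (b = true -> exists w, u = 2*w) -> (b = false -> exists w, u = 2*w+1) ->
  S <= (e+1)*(e+TR) - e*(e+1) -> S <= (e+2)*(e+TR) - 2*e - e*(e+1) ->
  4*(D*(D+1) + e*(e+1) + S) <= (if b then u*(u+2) else u*u+7).
Proof. intros He HT Hu Hb1 Hb2 HS1 HS2.
set (x := u - 2*D).
assert (u = 2*D + x) by lia.
assert (Hx: e + TR <= x) by lia.
assert (M1: forall a b, a <= b -> (e+1)*a <= (e+1)*b) by (intros; nia).
assert (M2: forall a b, a <= b -> (e+2)*a <= (e+2)*b) by (intros; nia).
assert ((D-e)*(x-1) >= 0) by nia.
destruct (Z.le_gt_cases (2*e) x).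
- assert (S + e*(e+1) <= (e+1)*x) by (specialize (M1 _ _ Hx); lia).
  destruct b.
  + nia.
  + destruct (Hb2 eq_refl) as [w Hw].
    assert (x = 3 \/ x >= 5) as [Hx3|] by lia.
    * assert (e = 1) by lia. subst e. nia.
    * assert ((x-1)*(x-5) >= 0) by nia. nia.
- assert (S + e*(e+1) <= (e+2)*x - 2*e) by (specialize (M2 _ _ Hx); lia).
  assert ((x-3)*(x-3) >= 0) by nia.
  destruct b; nia.
Qed.
Lemma arithZ (N m e1 nR kR qR c k q u w : Z) (b : bool) :
  0 <= N -> 0 <= nR -> 0 <= kR -> 0 <= qR -> 0 <= c -> 0 <= w -> 0 <= e1 ->
  u = 2*w + (if b then 1 else 0) ->
  N = m + e1 + nR -> (e1 = 0 -> k = 1 + kR) -> (1 <= e1 -> k = 2 + kR) ->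
  q = m*m + e1*e1 + qR -> 1 <= m -> e1 <= m ->
  (e1 = 0 -> nR = 0 /\ kR = 0 /\ qR = 0) -> kR <= nR ->
  qR + e1*kR <= (e1+1)*nR -> qR + e1*c + (e1+1)*kR <= (e1+2)*nR + c -> nR + c <= kR + e1*c ->
  m + N <= k + u + 1 ->
  if b then (4*q <= 4*N + u*u + 7 \/ (u = 9 /\ 8 <= N /\ q <= N + 24) \/ (u = 15 /\ 12 <= N /\ q <= N + 60))
  else 4*q <= 4*N + u*(u+2).
Proof.
intros HN0 HnR HkR0 HqR Hc0 Hw0 He10 Hu HN Hk0 Hk1 Hq Hm Hem He0 HkR Ha Hb Hc Hru.
destruct (Z.eq_dec e1 0) as [E|E].
- destruct (He0 E) as [E1 [E2 E3]]. specialize (Hk0 E). subst.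
  destruct b.
  + left. pose proof (L1o w (m - 1) 0 ltac:(lia) ltac:(lia) ltac:(lia) ltac:(lia)). nia.
  + pose proof (L1e w (m - 1) 0 ltac:(lia) ltac:(lia)). nia.
- specialize (Hk1 ltac:(lia)). clear Hk0 He0.
  destruct (Z.eq_dec nR kR) as [HT|HT].
  + subst nR. assert (qR <= kR) by nia. clear Ha Hb Hc.
    subst.
    destruct b.
    * destruct (Z.eq_dec m 4) as [->|Hm4]; [destruct (Z.eq_dec e1 4) as [->|He4]|].
      -- assert (9 <= 2*w+1) by lia.
         destruct (Z.eq_dec w 4) as [->|]. right; left; lia. left; nia.
      -- left. pose proof (L1o w (4 - 1) (e1-1) ltac:(lia) ltac:(lia) ltac:(lia) ltac:(lia)). nia.
      -- destruct (Z.eq_dec m 6) as [->|Hm6]; [destruct (Z.eq_dec e1 6) as [->|He6]|].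
         ++ assert (15 <= 2*w+1) by lia.
            destruct (Z.eq_dec w 7) as [->|]. right; right; lia. left; nia.
         ++ left. pose proof (L1o w (6 - 1) (e1-1) ltac:(lia) ltac:(lia) ltac:(lia) ltac:(lia)). nia.
         ++ left. pose proof (L1o w (m - 1) (e1-1) ltac:(lia) ltac:(lia) ltac:(lia) ltac:(lia)). nia.
    * pose proof (L1e w (m - 1) (e1-1) ltac:(lia) ltac:(lia)). nia.
  + assert (1 <= c) by nia.
    assert (2 <= e1) by nia.
    assert ((e1-1)*(c-1) >= 0) by nia.
    pose proof (L2 u (m-1) (e1-1) (nR - kR) (qR - nR) (negb b) ltac:(lia) ltac:(lia) ltac:(lia)
       ltac:(intros Eb; destruct b; simpl in *; try discriminate; exists w; lia) ltac:(intros Eb; destruct b; simpl in *; try discriminate; exists w; lia) ltac:(nia) ltac:(nia)).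
    subst. destruct b; cbn [negb] in H2; [left|]; nia.
Qed.
Close Scope Z_scope.
From mathcomp Require Import all_boot all_order all_algebra zify ring lra.
Import Order.TTheory GRing.Theory Num.Theory.
Set Implicit Arguments. Unset Strict Implicit.

Lemma sum_le_gen (T : finType) (R : {set T}) (F G : T -> nat) :
  (forall A, A \in R -> F A <= G A) -> \sum_(A in R) F A <= \sum_(A in R) G A.
Proof. by move=> H; apply: leq_sum. Qed.

Lemma decomp (T : finType) (P : {set {set T}}) : set0 \notin P -> P != set0 ->
 exists m e1 nR kR qR c,
 [/\ [/\ \max_(A in P) #|A| = m, \sum_(A in P) #|A| = m + e1 + nR, #|P| = (if e1 == 0 then 1 else 2) + kR &
     \sum_(A in P) #|A|^2 = m^2 + e1^2 + qR], [/\ 1 <= m, e1 <= m,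
     (e1 = 0 -> nR = 0 /\ kR = 0 /\ qR = 0) & kR <= nR] &
     [/\ qR + e1*kR <= (e1+1)*nR, qR + e1*c + (e1+1)*kR <= (e1+2)*nR + c & nR + c <= kR + e1*c]].
Proof.
move=> P0 Pn0.
have posP : 0 < #|P| by rewrite card_gt0.
have [A0 A0P Hm] := eq_bigmax_cond (fun A : {set T} => #|A|) posP.
have ne0 : forall A, A \in P -> 0 < #|A|.
  by move=> A AP; rewrite card_gt0; apply: contraNneq P0 => <-.
have leM : forall A, A \in P -> #|A| <= #|A0|.
  by move=> A AP; rewrite -Hm; apply: (leq_bigmax_cond A AP).
have HS1 : \sum_(A in P) #|A| = #|A0| + \sum_(A in P :\ A0) #|A| by rewrite (big_setD1 A0).
have HS2 : \sum_(A in P) #|A|^2 = #|A0|^2 + \sum_(A in P :\ A0) #|A|^2 by rewrite (big_setD1 A0).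
have HK : #|P| = (#|P :\ A0|).+1 by rewrite (cardsD1 A0) A0P.
have := ne0 _ A0P => m1.
case: (boolP (P :\ A0 == set0)) => [/eqP E|P'n0].
  exists #|A0|, 0, 0, 0, 0, 0; split; first split => //.
  - rewrite HS1 E big_set0; lia.
  - by rewrite HK E cards0.
  - rewrite HS2 E big_set0; lia.
  - split => //; lia.
  - split; lia.
have posP' : 0 < #|P :\ A0| by rewrite card_gt0.
have [A1 A1P Hm1] := eq_bigmax_cond (fun A : {set T} => #|A|) posP'.
have A1P0 : A1 \in P by move: A1P; rewrite !inE => /andP[].
have leM1 : forall A, A \in P :\ A0 -> #|A| <= #|A1|.
  by move=> A AP; rewrite -Hm1; apply: (leq_bigmax_cond A AP).
have HS1' : \sum_(A in P :\ A0) #|A| = #|A1| + \sum_(A in P :\ A0 :\ A1) #|A| by rewrite (big_setD1 A1).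
have HS2' : \sum_(A in P :\ A0) #|A|^2 = #|A1|^2 + \sum_(A in P :\ A0 :\ A1) #|A|^2 by rewrite (big_setD1 A1).
have HK' : #|P :\ A0| = (#|P :\ A0 :\ A1|).+1 by rewrite (cardsD1 A1) A1P.
set R := P :\ A0 :\ A1.
have e1pos : 0 < #|A1| by apply: ne0.
have inR : forall A, A \in R -> 1 <= #|A| <= #|A1|.
  move=> A AR; have AP' : A \in P :\ A0 by move: AR; rewrite inE => /andP[].
  have AP : A \in P by move: AP'; rewrite inE => /andP[].
  by rewrite ne0 // leM1.
set e1 := #|A1|.
exists #|A0|, e1, (\sum_(A in R) #|A|), #|R|, (\sum_(A in R) #|A|^2), (\sum_(A in R) (1 < #|A|) : nat).
have cR : #|R| = \sum_(A in R) 1 by rewrite sum1_card.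
split; first split => //.
- by rewrite HS1 HS1' addnA.
- have -> : (e1 == 0) = false by apply/eqP; lia.
  by rewrite HK HK'.
- by rewrite HS2 HS2' addnA.
split.
- lia.
- by apply: leM.
- lia.
- by rewrite cR; apply: leq_sum => A /inR; lia.
split.
- rewrite cR big_distrr big_distrr -big_split /=; apply: leq_sum => A /inR H; nia.
- rewrite cR !big_distrr -!big_split /=; apply: leq_sum => A /inR H.
  case: (ltnP 1 #|A|) => /= H2; nia.
- rewrite cR !big_distrr -!big_split /=; apply: leq_sum => A /inR H.
  case: (ltnP 1 #|A|) => /= H2; nia.
Qed.
Lemma sum_pt m n x : \sum_(m <= i < n) (i == x : nat) = (m <= x < n).
Proof.
rewrite (eq_bigr (fun i => if i == x then 1 else 0)); last by move=> i _; case: (i == x).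
rewrite -big_mkcond sum1_count count_uniq_mem ?mem_index_iota //.
by rewrite /index_iota iota_uniq.
Qed.

Lemma sum_const_range m n c : m <= n -> \sum_(m <= i < n) c = (n - m) * c.
Proof. by move=> _; rewrite sum_nat_const_nat. Qed.

Lemma card_ord_pred N (p : pred nat) : #|[set y : 'I_N | p y]| = \sum_(0 <= i < N) (p i : nat).
Proof.
rewrite -sum1_card big_mkcond /= [RHS]big_mkord; apply: eq_bigr => i _.
by rewrite inE; case: (p i).
Qed.

Definition gg (a b i : nat) : nat := if i < a then 0 else if i < a + b then a else i.

Lemma cnt_val N a b x : 1 <= a -> b <= a -> a + b <= N -> x < N -> \sum_(0 <= i < N) (gg a b x == gg a b i : nat) =
   (if x < a then a else if x < a + b then b else 1).
Proof.
move=> Ha Hba HN xN.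
rewrite (@big_cat_nat _ _ _ a) //=; last by lia.
rewrite (@big_cat_nat _ _ _ (a + b) a N) //=; try lia.
rewrite /gg.
case: (ltnP x a) => xa.
- rewrite (eq_big_nat _ _ (F2 := fun _ => 1)); last by move=> i /andP[_ ->].
  rewrite (eq_big_nat _ _ (F2 := fun _ => 0) (m:=a)); last first.
    move=> i /andP[H1 H2]; rewrite ltnNge H1 /= H2; lia.
  rewrite (eq_big_nat _ _ (F2 := fun _ => 0) (m:=a+b)); last first.
    move=> i /andP[H1 H2]; rewrite ltnNge (leq_trans _ H1) ?leq_addr //= ltnNge H1 /=; lia.
  rewrite !sum_nat_const_nat; lia.
case: (ltnP x (a + b)) => xab.
- rewrite (eq_big_nat _ _ (F2 := fun _ => 0)); last by move=> i /andP[_ ->]; lia.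
  rewrite (eq_big_nat _ _ (F2 := fun _ => 1) (m:=a)); last first.
    move=> i /andP[H1 H2]; rewrite ltnNge H1 /= H2 eqxx //.
  rewrite (eq_big_nat _ _ (F2 := fun _ => 0) (m:=a+b)); last first.
    move=> i /andP[H1 H2]; rewrite ltnNge (leq_trans _ H1) ?leq_addr //= ltnNge H1 /=; lia.
  rewrite !sum_nat_const_nat; lia.
- rewrite (eq_big_nat _ _ (F2 := fun _ => 0)); last by move=> i /andP[_ ->]; lia.
  rewrite (eq_big_nat _ _ (F2 := fun _ => 0) (m:=a)); last first.
    move=> i /andP[H1 H2]; rewrite ltnNge H1 /= H2; lia.
  rewrite (eq_big_nat _ _ (F2 := fun i => (i == x : nat)) (m:=a+b)); last first.
    move=> i /andP[H1 H2]; rewrite ltnNge (leq_trans _ H1) ?leq_addr //= ltnNge H1 /= eq_sym //.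
  rewrite !sum_nat_const_nat sum_pt; lia.
Qed.
Lemma construct N a b : 1 <= a -> b <= a -> a + b <= N ->
  exists P : {set {set 'I_N}}, [/\ partition P [set: 'I_N], maxblock P <= a,
     1 + (0 < b) + (N - a - b) <= #|P| & \sum_(A in P) #|A|^2 = a^2 + b^2 + (N - a - b)].
Proof.
move=> Ha Hba HN.
pose f := fun x : 'I_N => gg a b x.
pose P := preim_partition f [set: 'I_N].
have partP : partition P [set: 'I_N] by apply: preim_partitionP.
have eqiR : {in [set: 'I_N] & &, equivalence_rel (fun x y => f x == f y)}.
  by split=> // /eqP->.
have cls : forall x : 'I_N, #|[set y in [set: 'I_N] | f x == f y]| =
   (if x < a then a else if x < a + b then b else 1).
  move=> x; rewrite -(cnt_val Ha Hba HN (ltn_ord x)) -card_ord_pred.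
  by apply: eq_card => y; rewrite !inE.
have pbl : forall x : 'I_N, #|pblock P x| = (if x < a then a else if x < a + b then b else 1).
  move=> x; rewrite -cls; apply: eq_card => y.
  rewrite (pblock_equivalence_partition eqiR) ?inE //.
exists P; split => //.
- apply/bigmax_leqP => A /imsetP [x _ ->]; rewrite cls.
  case: ifP => _ //; case: ifP => _ //.
- have S_sub : [set [set y in [set: 'I_N] | f x == f y] | x in [set x : 'I_N | gg a b x == x]] \subset P.
    by apply: imsetS; apply/subsetP => x; rewrite !inE.
  apply: leq_trans (subset_leq_card S_sub).
  rewrite card_in_imset; last first.
    move=> x y; rewrite !inE => /eqP Hx /eqP Hy E.
    have : y \in [set y0 in [set: 'I_N] | f y == f y0] by rewrite !inE eqxx.
    rewrite -E.
    rewrite !inE /f Hx Hy => /eqP H; apply/val_inj; exact: H.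
  rewrite (card_ord_pred N (fun i => gg a b i == i)) (@big_cat_nat _ _ _ a) //=; last by lia.
  rewrite (@big_cat_nat _ _ _ (a + b) a N) //=; try lia.
  rewrite /gg.
  rewrite (eq_big_nat _ _ (F2 := fun i => (i == 0 : nat))); last first.
    by move=> i /andP[_ ->]; rewrite eq_sym.
  rewrite (eq_big_nat _ _ (F2 := fun i => (i == a : nat)) (m:=a)); last first.
    move=> i /andP[H1 H2]; rewrite ltnNge H1 /= H2 eq_sym //.
  rewrite (eq_big_nat _ _ (F2 := fun _ => 1) (m:=a+b)); last first.
    move=> i /andP[H1 H2]; rewrite ltnNge (leq_trans _ H1) ?leq_addr //= ltnNge H1 /= eqxx //.
  rewrite !sum_pt sum_nat_const_nat.
  have -> : (0 <= 0 < a) = true by rewrite Ha.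
  have -> : (a <= a < a + b) = (0 < b) by rewrite leqnn /= -{1}(addn0 a) ltn_add2l.
  lia.
- have tiP := partition_trivIset partP.
  have cov := cover_partition partP.
  have E1 : \sum_(x in [set: 'I_N]) #|pblock P x| = \sum_(A in P) \sum_(x in A) #|pblock P x|.
    by rewrite -{1}cov big_trivIset.
  have E2 : \sum_(A in P) \sum_(x in A) #|pblock P x| = \sum_(A in P) #|A|^2.
    apply: eq_bigr => A PA.
    rewrite (eq_bigr (fun _ => #|A|)); last by move=> x Ax; rewrite (def_pblock tiP PA Ax).
    by rewrite sum_nat_const.
  rewrite -E2 -E1.
  rewrite (eq_bigl (fun _ => true)); last by move=> x; rewrite inE.
  rewrite (eq_bigr (fun x : 'I_N => (fun i : nat => if i < a then a else if i < a + b then b else 1) x)); last by move=> x _; rewrite pbl.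
  rewrite -(big_mkord xpredT (fun i : nat => if i < a then a else if i < a + b then b else 1)).
  rewrite (@big_cat_nat _ _ _ a) //=; last by lia.
  rewrite (@big_cat_nat _ _ _ (a + b) a N) //=; try lia.
  rewrite (eq_big_nat _ _ (F2 := fun _ => a)); last by move=> i /andP[_ ->].
  rewrite (eq_big_nat _ _ (F2 := fun _ => b) (m:=a)); last first.
    move=> i /andP[H1 H2]; rewrite ltnNge H1 /= H2 //.
  rewrite (eq_big_nat _ _ (F2 := fun _ => 1) (m:=a+b)); last first.
    move=> i /andP[H1 H2]; rewrite ltnNge (leq_trans _ H1) ?leq_addr //= ltnNge H1 //.
  rewrite !sum_nat_const_nat; lia.
Qed.

Lemma arithN (N m e1 nR kR qR c k q u : nat) :
  N = m + e1 + nR -> (e1 = 0 -> k = 1 + kR) -> (0 < e1 -> k = 2 + kR) ->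
  q = m^2 + e1^2 + qR -> 1 <= m -> e1 <= m ->
  (e1 = 0 -> nR = 0 /\ kR = 0 /\ qR = 0) -> kR <= nR ->
  qR + e1*kR <= (e1+1)*nR -> qR + e1*c + (e1+1)*kR <= (e1+2)*nR + c -> nR + c <= kR + e1*c ->
  m + N <= k + u + 1 ->
  (if odd u then 4*q <= 4*N + u*u + 7 \/ (u = 9 /\ 8 <= N /\ q <= N + 24) \/ (u = 15 /\ 12 <= N /\ q <= N + 60)
   else 4*q <= 4*N + u*(u+2)).
Proof.
move=> HN Hk0 Hk1 Hq Hm Hem He0 HkR Ha Hb Hc Hu.
have [w Hw] : exists w, u = w.*2 + odd u by exists u./2; rewrite addnC odd_double_half.
have H0 : Z.of_nat e1 = Z.of_nat 0 -> Z.of_nat nR = Z.of_nat 0 /\ Z.of_nat kR = Z.of_nat 0 /\ Z.of_nat qR = Z.of_nat 0.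
  move=> E; have /He0 : e1 = 0 by lia. lia.
case: (odd u) Hw => /= Hw; rewrite -muln2 in Hw.
- have := arithZ (Z.of_nat N) (Z.of_nat m) (Z.of_nat e1) (Z.of_nat nR) (Z.of_nat kR) (Z.of_nat qR)
    (Z.of_nat c) (Z.of_nat k) (Z.of_nat q) (Z.of_nat u) (Z.of_nat w) true
    ltac:(lia) ltac:(lia) ltac:(lia) ltac:(lia) ltac:(lia) ltac:(lia) ltac:(lia) ltac:(cbv beta iota; lia) ltac:(lia)
    ltac:(intro; have : e1 = 0 by lia; move/Hk0; lia) ltac:(intro; have : 0 < e1 by lia; move/Hk1; lia)
    ltac:(lia) ltac:(lia) ltac:(lia) H0 ltac:(lia) ltac:(lia) ltac:(lia) ltac:(lia) ltac:(lia).
  move=> H; cbv beta iota in H; lia.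
- have := arithZ (Z.of_nat N) (Z.of_nat m) (Z.of_nat e1) (Z.of_nat nR) (Z.of_nat kR) (Z.of_nat qR)
    (Z.of_nat c) (Z.of_nat k) (Z.of_nat q) (Z.of_nat u) (Z.of_nat w) false
    ltac:(lia) ltac:(lia) ltac:(lia) ltac:(lia) ltac:(lia) ltac:(lia) ltac:(lia) ltac:(cbv beta iota; lia) ltac:(lia)
    ltac:(intro; have : e1 = 0 by lia; move/Hk0; lia) ltac:(intro; have : 0 < e1 by lia; move/Hk1; lia)
    ltac:(lia) ltac:(lia) ltac:(lia) H0 ltac:(lia) ltac:(lia) ltac:(lia) ltac:(lia) ltac:(lia).
  move=> H; cbv beta iota in H; lia.
Qed.

Lemma part_ub N (r : int) (u : nat) (P : {set {set 'I_N}}) : 0 < N ->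
  (N%:Z + r - 1 = u%:Z)%R ->
  partition P [set: 'I_N] -> (dyson_rank P <= r)%R ->
  let q := \sum_(A in P) #|A|^2 in
  (if odd u then 4*q <= 4*N + u*u + 7 \/ (u = 9 /\ 8 <= N /\ q <= N + 24) \/ (u = 15 /\ 12 <= N /\ q <= N + 60)
   else 4*q <= 4*N + u*(u+2)).
Proof.
move=> N0 Hu partP Hr q.
have P0 : set0 \notin P by rewrite (partition0 partP).
have Pn0 : P != set0.
  apply/eqP => E; move: (cover_partition partP); rewrite E /cover big_set0 => /setP /(_ (Ordinal N0)).
  by rewrite !inE.
have [m [e1 [nR [kR [qR [c [[Hmax HN Hk Hq] [Hm Hem He0 HkR] [Ha Hb Hc]]]]]]]] := decomp P0 Pn0.
have HN' : N = m + e1 + nR by rewrite -HN -(card_partition partP) cardsT card_ord.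
have Hr' : m + N <= #|P| + u + 1.
  move: Hr; rewrite /dyson_rank /maxblock Hmax => Hr; lia.
apply: (arithN HN' _ _ Hq Hm Hem He0 HkR Ha Hb Hc Hr').
- by move=> E; rewrite Hk E.
- by move=> E; rewrite Hk; case: (e1 =P 0) => // E'; lia.
Qed.

Lemma frnk_le N r B : (forall P : {set {set 'I_N}}, partition P [set: 'I_N] -> (dyson_rank P <= r)%R ->
   \sum_(A in P) #|A|^2 <= B) -> frnk N r <= B.
Proof. by move=> H; apply/bigmax_leqP => P /andP[H1 H2]; apply: H. Qed.

Lemma frnk_ge N r (P : {set {set 'I_N}}) : partition P [set: 'I_N] -> (dyson_rank P <= r)%R ->
   \sum_(A in P) #|A|^2 <= frnk N r.
Proof. by move=> H1 H2; apply: (leq_bigmax_cond P); rewrite H1 H2. Qed.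

Lemma lb N (r : int) a b : 1 <= a -> b <= a -> a + b <= N ->
  (a%:Z - (1 + (0 < b) + (N - a - b))%:Z <= r)%R ->
  a^2 + b^2 + (N - a - b) <= frnk N r.
Proof.
move=> Ha Hba HN Hr.
have [P [partP Hmax Hk Hq]] := construct Ha Hba HN.
rewrite -Hq; apply: frnk_ge => //.
rewrite /dyson_rank; lia.
Qed.

Unset Implicit Arguments.
Local Open Scope ring_scope.

Lemma ratE2 (X A B : int) : X * 4 = A ^+ 2 + 2 * B -> X%:~R = (A%:~R ^+ 2) / 4 + B%:~R / 2 :> rat.
Proof.
move=> H; have H' := congr1 (fun z : int => z%:~R : rat) H.
move: H'; rewrite /= !intrD !intrM => H'; lra.
Qed.

Lemma ratE3 (X A B : int) : X * 4 = A ^+ 2 + 2 * B + 8 -> X%:~R = (A%:~R ^+ 2) / 4 + B%:~R / 2 + 2 :> rat.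
Proof.
move=> H; have H' := congr1 (fun z : int => z%:~R : rat) H.
move: H'; rewrite /= !intrD !intrM => H'; lra.
Qed.

Theorem lemma3 (N : nat) (r : int) :
  (1 <= N)%N ->
  - (N%:Z - 1) <= r -> r <= N%:Z - 1 ->
  r != N%:Z - 2 -> r != - (N%:Z - 2) ->
  [/\ (~~ (2 %| N%:Z + r)%Z ->
        (frnk N r)%:Q = ((N%:Z + r + 1)%:~R ^+ 2) / 4 + (N%:Z - r - 1)%:~R / 2),
      (N%:Z + r = 10 -> (8 <= N)%N -> (frnk N r)%:Z = 34 - r),
      (N%:Z + r = 16 -> (12 <= N)%N -> (frnk N r)%:Z = 76 - r)
    & ((2 %| N%:Z + r)%Z ->
        ~ (N%:Z + r = 10 /\ (8 <= N)%N) ->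
        ~ (N%:Z + r = 16 /\ (12 <= N)%N) ->
        (frnk N r)%:Q = ((N%:Z + r)%:~R ^+ 2) / 4 + (N%:Z - r)%:~R / 2 + 2)].
Proof.
move=> N1 Hlo Hhi Hne1 Hne2.
have Hne1' : r <> N%:Z - 2 by apply/eqP.
have Hne2' : r <> - (N%:Z - 2) by apply/eqP.
have [u Hu] : exists u : nat, N%:Z + r - 1 = u%:Z.
  case: r Hlo Hhi Hne1 Hne2 Hne1' Hne2' => n *.
  - by exists (N + n - 1)%N; lia.
  - by exists (N - n - 2)%N; lia.
have [w Hw] : exists w, u = (w.*2 + odd u)%N by exists u./2; rewrite addnC odd_double_half.
have ub := fun P => @part_ub N r u P N1 Hu.
have HS : N%:Z + r = (u.+1)%:Z by lia.
have Hpar : (2 %| N%:Z + r)%Z = odd u.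
  by rewrite HS dvdzE /= dvdn2 /= negbK.
rewrite Hpar.
split.
- move=> /negbTE Hodd; rewrite Hodd /= in Hw.
  have F : frnk N r = (N + w * (w + 1))%N.
    apply/eqP; rewrite eqn_leq; apply/andP; split.
    + apply: frnk_le => P partP Hr; move: (ub P partP Hr); rewrite Hodd /=; lia.
    + have := @lb N r (w + 1) 0 ltac:(lia) ltac:(lia) ltac:(lia) ltac:(simpl; lia). lia.
  apply: ratE2; rewrite F.
  have Er : r = (w.*2 + 1)%:Z - N%:Z by lia.
  rewrite Er; nia.
- move=> H10 HN8.
  have U : u = 9%N by lia.
  have F : frnk N r = (N + 24)%N.
    apply/eqP; rewrite eqn_leq; apply/andP; split.
    + apply: frnk_le => P partP Hr; move: (ub P partP Hr); rewrite U /=; lia.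
    + have := @lb N r 4 4 ltac:(lia) ltac:(lia) ltac:(lia) ltac:(simpl; lia). lia.
  rewrite F; lia.
- move=> H16 HN12.
  have U : u = 15%N by lia.
  have F : frnk N r = (N + 60)%N.
    apply/eqP; rewrite eqn_leq; apply/andP; split.
    + apply: frnk_le => P partP Hr; move: (ub P partP Hr); rewrite U /=; lia.
    + have := @lb N r 6 6 ltac:(lia) ltac:(lia) ltac:(lia) ltac:(simpl; lia). lia.
  rewrite F; lia.
- move=> Hodd Hn10 Hn16; rewrite Hodd /= in Hw.
  have F : frnk N r = (N + w * (w + 1) + 2)%N.
    apply/eqP; rewrite eqn_leq; apply/andP; split.
    + apply: frnk_le => P partP Hr; move: (ub P partP Hr); rewrite Hodd /=; lia.
    + have := @lb N r (w + 1) 2 ltac:(lia) ltac:(lia) ltac:(lia) ltac:(simpl; lia). lia.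
  apply: ratE3; rewrite F.
  have Er : r = (w.*2 + 2)%:Z - N%:Z by lia.
  rewrite Er; nia.
Qed.
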